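(* If $f\in\mathcal G_0\setminus\{i\}$, then there exist $g_1,g_2\in\mathcal G_0$ such that $$\int_{-1}^1 f(g_1^{-1}(t))\,dt>0>\int_{-1}^1 f(g_2^{-1}(t))\,dt,$$ i.e. $Q(f,g_1)>0>Q(f,g_2)$, so $g_1\to f\to g_2$ in $\Gamma_{\mathcal G}$. If moreover $f\in\mathcal G_0\setminus\mathcal G_{00}$, then $g_1,g_2$ can be chosen in $\mathcal G_{00}$.
   Context: Let $\mathcal G$ be the group (under composition) of strictly increasing continuous maps $f:[-1,1]\to[-1,1]$ with $f(\pm1)=\pm1$; $i\in\mathcal G$ is the identity $i(t)=t$. Let $\mathcal G_0=\{f\in\mathcal G:\int_{-1}^1 f(t)\,dt=0\}$ and $\mathcal G_{00}=\{f\in\mathcal G: f(-t)=-f(t)\ \forall t\}$ (the odd elements; $\mathcal G_{00}\subset\mathcal G_0$). For $f,g\in\mathcal G$ put $Q(f,g)=\int_{-1}^1 f(g^{-1}(t))\,dt$. The digraph $\Gamma_{\mathcal G}$ on $\mathcal G$ has an edge $g\to f$ iff $Q(f,g)>0$. *)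

(* Defs.v *)
From Stdlib Require Import Reals ClassicalEpsilon.
From Coquelicot Require Import Coquelicot.
Open Scope R_scope.

Definition I11 (x : R) : Prop := -1 <= x <= 1.

(* f : [-1,1] -> [-1,1] represented as a function R -> R whose values outside
   [-1,1] are irrelevant. *)
Definition inG (f : R -> R) : Prop :=
  (forall x y, I11 x -> I11 y -> x < y -> f x < f y) /\
  (forall x, I11 x -> filterlim f (within I11 (locally x)) (locally (f x))) /\
  f (-1) = -1 /\ f 1 = 1.

Definition inG0 (f : R -> R) : Prop := inG f /\ RInt f (-1) 1 = 0.

Definition inG00 (f : R -> R) : Prop :=
  inG f /\ (forall t, I11 t -> f (- t) = - f t).

Definition is_id (f : R -> R) : Prop := forall t, I11 t -> f t = t.

Definition Ginv (g : R -> R) (y : R) : R :=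
  epsilon (inhabits 0) (fun x => I11 x /\ g x = y).

Definition Q (f g : R -> R) : R := RInt (fun t => f (Ginv g t)) (-1) 1.

(* Main.v *)
Require Import Defs.
From Stdlib Require Import Reals Lra Psatz Classical ClassicalEpsilon.
From Coquelicot Require Import Coquelicot.
Open Scope R_scope.

Definition clampR (p q s : R) : R := Rmax p (Rmin q s).

Lemma clampR_lip p q x y : p <= q -> Rabs (clampR p q x - clampR p q y) <= Rabs (x - y).
Proof.
  intros. unfold clampR, Rmax, Rmin.
  repeat destruct Rle_dec; unfold Rabs; repeat destruct Rcase_abs; lra.
Qed.

Lemma clampR_cont p q x : p <= q -> continuous (clampR p q) x.
Proof.
  intros H. apply filterlim_locally. intros eps. exists eps. intros y Hy.
  change (Rabs (clampR p q y - clampR p q x) < eps).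
  change (Rabs (y - x) < eps) in Hy.
  eapply Rle_lt_trans; [apply clampR_lip; auto| exact Hy].
Qed.

Lemma clampR_lo p q s : p <= q -> s <= p -> clampR p q s = p.
Proof. intros. unfold clampR, Rmax, Rmin. repeat destruct Rle_dec; lra. Qed.
Lemma clampR_hi p q s : p <= q -> q <= s -> clampR p q s = q.
Proof. intros. unfold clampR, Rmax, Rmin. repeat destruct Rle_dec; lra. Qed.
Lemma clampR_mid p q s : p <= s <= q -> clampR p q s = s.
Proof. intros. unfold clampR, Rmax, Rmin. repeat destruct Rle_dec; lra. Qed.
Lemma clampR_mono p q x y : p <= q -> x <= y -> clampR p q x <= clampR p q y.
Proof. intros. unfold clampR, Rmax, Rmin. repeat destruct Rle_dec; lra. Qed.
Lemma clampR_in p q x : p <= q -> p <= clampR p q x <= q.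
Proof. intros. unfold clampR, Rmax, Rmin. repeat destruct Rle_dec; lra. Qed.

Definition fc (f : R -> R) (x : R) : R := f (clampR (-1) 1 x).

Lemma fc_eq f x : I11 x -> fc f x = f x.
Proof. intros H. unfold fc. rewrite clampR_mid; auto. Qed.

Lemma fc_cont f : inG f -> forall x, continuous (fc f) x.
Proof.
  intros [_ [Hc _]] x. unfold fc.
  set (y := clampR (-1) 1 x).
  assert (Hy : I11 y) by (unfold I11, y; apply clampR_in; lra).
  specialize (Hc y Hy).
  intros P HP.
  assert (H1 : filterlim (clampR (-1) 1) (locally x) (locally y)) by (apply clampR_cont; lra).
  specialize (Hc P HP). unfold filtermap, within in Hc.
  specialize (H1 _ Hc). unfold filtermap in H1 |- *.
  eapply filter_imp; [|exact H1]. intros w Hw. apply Hw. unfold I11. apply clampR_in. lra.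
Qed.
Lemma exc (k : R -> R) a b : (forall x, continuous k x) -> ex_RInt k a b.
Proof. intros H. apply (ex_RInt_continuous (V:=R_CompleteNormedModule)). intros; apply H. Qed.

Lemma cont_lin u v x : continuous (fun y => u * y + v) x.
Proof.
    apply (continuous_plus (fun y => u * y) (fun _ => v)). 2: apply continuous_const.
    apply (continuous_mult (fun _ => u) (fun y => y)). apply continuous_const. apply continuous_id.
Qed.
Lemma cont_opp x : continuous (fun y => - y) x.
Proof. apply (continuous_ext (fun y => -1 * y + 0)); [intros; simpl; ring | apply cont_lin]. Qed.

Lemma piece (F G : R -> R) a b : a < b -> (forall x, continuous G x) ->
  (forall x, a < x < b -> F x = G x) -> ex_RInt F a b /\ RInt F a b = RInt G a b.
Proof.
  intros Hab HG HFG.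
  assert (H' : forall x, Rmin a b < x < Rmax a b -> G x = F x).
  { rewrite Rmin_left, Rmax_right by lra. intros; symmetry; auto. }
  split.
  - apply (ex_RInt_ext G F a b H'). apply exc; auto.
  - symmetry. apply RInt_ext. auto.
Qed.

Lemma RInt_linear B r p q : RInt (fun s => B + r * (s - p)) p q = (q - p) * B + r * (q - p)^2 / 2.
Proof.
  apply is_RInt_unique.
  assert (H := is_RInt_derive (V:=R_CompleteNormedModule)
     (fun s => B * s + r * (s - p)^2 / 2) (fun s => B + r * (s - p)) p q).
  replace ((q - p) * B + r * (q - p)^2 / 2) with
     (minus (B * q + r * (q - p)^2 / 2) (B * p + r * (p - p)^2 / 2)).
  2:{ change (B * q + r * (q - p)^2 / 2 - (B * p + r * (p - p)^2 / 2) = (q - p) * B + r * (q - p)^2 / 2 :> R). field. }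
  apply H.
  - intros x _. auto_derive; auto. field.
  - intros x _. apply (continuous_plus (fun _ => B) (fun s => r * (s - p))).
    apply continuous_const.
    apply (continuous_mult (fun _ => r) (fun s => s - p)). apply continuous_const.
    apply (continuous_plus (fun s => s) (fun _ => - p)). apply continuous_id. apply continuous_const.
Qed.

Lemma RInt_lin_sub (k : R -> R) a b b' r : 0 < r -> (forall x, continuous k x) ->
  RInt (fun t => k (a + (t - b) / r)) b b' = r * RInt k a (a + (b' - b) / r).
Proof.
  intros Hr Hk.
  assert (E := RInt_comp_lin k (/ r) (a - b / r) b b' (exc _ _ _ Hk)).
  replace (/ r * b + (a - b / r)) with a in E by (field; lra).
  replace (/ r * b' + (a - b / r)) with (a + (b' - b) / r) in E by (field; lra).
  rewrite <- E.
  rewrite <- (RInt_scal (V:=R_CompleteNormedModule)).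
  - apply RInt_ext. intros x _. change (k (a + (x - b) / r) = r * (/ r * k (/ r * x + (a - b / r)))).
    replace (/ r * x + (a - b / r)) with (a + (x - b) / r) by (field; lra). field; lra.
  - apply exc. intros x. apply (continuous_scal_r (/ r) (fun y => k (/ r * y + (a - b / r)))).
    apply (continuous_comp (fun y => / r * y + (a - b / r)) k). 2: apply Hk.
    apply (continuous_plus (fun y => / r * y) (fun _ => a - b / r)). 2: apply continuous_const.
    apply (continuous_mult (fun _ => / r) (fun y => y)). apply continuous_const. apply continuous_id.
Qed.

Lemma RInt_refl (k : R -> R) a b : (forall x, continuous k x) ->
  RInt (fun y => k (- y)) a b = RInt k (- b) (- a).
Proof.
  intros Hk.
  assert (E := RInt_comp_lin k (-1) 0 a b (exc _ _ _ Hk)).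
  replace (-1 * a + 0) with (- a) in E by ring.
  replace (-1 * b + 0) with (- b) in E by ring.
  assert (Ecs : ex_RInt (fun y => k (- y)) a b).
  { apply exc. intros x. apply (continuous_comp (fun y => - y) k). 2: apply Hk.
    apply cont_opp. }
  assert (E2 : RInt k (- a) (- b) = - RInt (fun y => k (- y)) a b).
  { rewrite <- E. rewrite (RInt_ext _ (fun y => opp (k (- y)))).
    2:{ intros x _. change (-1 * k (-1 * x + 0) = - k (- x)). replace (-1 * x + 0) with (- x) by ring. ring. }
    rewrite (RInt_opp (V:=R_CompleteNormedModule)); auto. }
  assert (E3 := opp_RInt_swap (V:=R_CompleteNormedModule) k (- a) (- b) (exc _ _ _ Hk)).
  change (- RInt k (- a) (- b) = RInt k (- b) (- a)) in E3.
  lra.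
Qed.
Lemma zero_int (k : R -> R) : (forall x, continuous k x) ->
  (forall c, 0 < c < 1 -> RInt k 0 c = 0) -> forall s, 0 <= s <= 1 -> k s = 0.
Proof.
  intros Hk H0 s Hs.
  destruct (Req_dec (k s) 0) as [E|E]; auto. exfalso.
  assert (He : 0 < Rabs (k s) / 2) by (apply Rabs_pos_lt in E; lra).
  destruct (proj1 (filterlim_locally k (k s)) (Hk s) (mkposreal _ He)) as [d Hd].
  simpl in Hd.
  set (lo := Rmax 0 (s - d)). set (hi := Rmin 1 (s + d)).
  assert (Hd0 := cond_pos d).
  assert (Hlo : 0 <= lo /\ s - d <= lo /\ lo <= s) by (unfold lo, Rmax; destruct Rle_dec; lra).
  assert (Hhi : hi <= 1 /\ hi <= s + d /\ s <= hi) by (unfold hi, Rmin; destruct Rle_dec; lra).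
  assert (Hlh : lo < hi).
  { unfold lo, hi, Rmax, Rmin. repeat destruct Rle_dec; lra. }
  set (p := lo + (hi - lo) / 3). set (q := lo + 2 * (hi - lo) / 3).
  assert (Hpq : 0 < p < q /\ q < 1) by (unfold p, q; lra).
  assert (Hin : forall x, p < x < q -> Rabs (k x - k s) < Rabs (k s) / 2).
  { intros x Hx. apply (Hd x). change (Rabs (x - s) < d).
    unfold p, q in Hx. apply Rabs_def1; lra. }
  assert (HI : RInt k p q = 0).
  { assert (Ec: RInt k 0 p + RInt k p q = RInt k 0 q) by (apply (RInt_Chasles k 0 p q); apply exc; auto).
    rewrite (H0 p ltac:(lra)), (H0 q ltac:(lra)) in Ec. lra. }
  destruct (Rlt_dec 0 (k s)) as [Pos|Neg].
  - assert (L : RInt (fun _ => k s / 2) p q <= RInt k p q).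
    { apply RInt_le; [lra | apply exc; intros; apply continuous_const | apply exc; auto |].
      intros x Hx. specialize (Hin x Hx). rewrite (Rabs_pos_eq (k s)) in Hin by lra.
      apply Rabs_def2 in Hin. lra. }
    rewrite RInt_const in L. change (scal (q - p) (k s / 2)) with ((q - p) * (k s / 2)) in L.
    assert (0 < (q - p) * (k s / 2)) by (apply Rmult_lt_0_compat; lra). lra.
  - assert (L : RInt k p q <= RInt (fun _ => k s / 2) p q).
    { apply RInt_le; [lra | apply exc; auto | apply exc; intros; apply continuous_const |].
      intros x Hx. specialize (Hin x Hx). rewrite (Rabs_left (k s)) in Hin by lra.
      apply Rabs_def2 in Hin. lra. }
    rewrite RInt_const in L. change (scal (q - p) (k s / 2)) with ((q - p) * (k s / 2)) in L.
    assert (0 < (q - p) * (- k s / 2)) by (apply Rmult_lt_0_compat; lra). lra.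
Qed.

Lemma cplus (f g : R -> R) x : continuous f x -> continuous g x -> continuous (fun y => f y + g y) x.
Proof. intros; apply (continuous_plus f g); auto. Qed.
Lemma cmult (f g : R -> R) x : continuous f x -> continuous g x -> continuous (fun y => f y * g y) x.
Proof. intros; apply (continuous_mult f g); auto. Qed.
Lemma cconst (c : R) x : continuous (fun _ : R => c) x.
Proof. apply continuous_const. Qed.
Lemma cid x : continuous (fun y : R => y) x.
Proof. apply continuous_id. Qed.
Lemma cminus (f g : R -> R) x : continuous f x -> continuous g x -> continuous (fun y => f y - g y) x.
Proof. intros. apply (continuous_ext (fun y => f y + (-1) * g y)). intros; simpl; ring.
  apply cplus; auto. apply cmult; auto. apply cconst. Qed.

Lemma cont_within (g : R -> R) D x : continuous g x -> filterlim g (within D (locally x)) (locally (g x)).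
Proof.
  intros H P HP. specialize (H P HP). unfold filtermap, within in *.
  eapply filter_imp; [|exact H]. intros; auto.
Qed.

Lemma Ginv_eq g x : (forall x y, I11 x -> I11 y -> x < y -> g x < g y) -> I11 x -> Ginv g (g x) = x.
Proof.
  intros Hm Hx. unfold Ginv.
  destruct (epsilon_spec (inhabits 0) (fun z => I11 z /\ g z = g x) (ex_intro _ x (conj Hx eq_refl))) as [H1 H2].
  set (e := epsilon _ _) in *.
  destruct (Rtotal_order e x) as [L|[L|L]]; auto.
  - specialize (Hm _ _ H1 Hx L). lra.
  - specialize (Hm _ _ Hx H1 L). lra.
Qed.

Lemma Chasles4 (F : R -> R) p0 p1 p2 p3 p4 :
  ex_RInt F p0 p1 -> ex_RInt F p1 p2 -> ex_RInt F p2 p3 -> ex_RInt F p3 p4 ->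
  RInt F p0 p4 = RInt F p0 p1 + RInt F p1 p2 + RInt F p2 p3 + RInt F p3 p4.
Proof.
  intros H1 H2 H3 H4.
  assert (H12 := ex_RInt_Chasles _ _ _ _ H1 H2).
  assert (H123 := ex_RInt_Chasles _ _ _ _ H12 H3).
  rewrite <- (RInt_Chasles F p0 p3 p4) by auto.
  rewrite <- (RInt_Chasles F p0 p2 p3) by auto.
  rewrite <- (RInt_Chasles F p0 p1 p2) by auto.
  reflexivity.
Qed.

Definition gP c r1 r2 r3 r4 (s : R) : R :=
  -1 + r1 * (clampR (-1) (-c) s + 1) + r2 * (clampR (-c) 0 s + c)
     + r3 * clampR 0 c s + r4 * (clampR c 1 s - c).

Definition Hyp c r1 r2 r3 r4 : Prop :=
  0 < c < 1 /\ 0 < r1 /\ 0 < r2 /\ 0 < r3 /\ 0 < r4 /\ (1 - c) * (r1 + r4) + c * (r2 + r3) = 2.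

Lemma Qpiece (f g : R -> R) (a a' bb r : R) : inG f -> (forall x y, I11 x -> I11 y -> x < y -> g x < g y) ->
  0 < r -> a < a' -> -1 <= a -> a' <= 1 -> (forall x, a <= x <= a' -> g x = bb + r * (x - a)) ->
  ex_RInt (fun t => f (Ginv g t)) bb (bb + r * (a' - a)) /\ RInt (fun t => f (Ginv g t)) bb (bb + r * (a' - a)) = r * RInt (fc f) a a'.
Proof.
  intros Hf Hm Hr Ha Ha1 Ha2 Hg.
  assert (Hk := fc_cont f Hf).
  destruct (piece (fun t => f (Ginv g t)) (fun t => fc f (a + (t - bb) / r)) bb (bb + r * (a' - a))) as [P1 P2].
  - assert (0 < r * (a' - a)) by (apply Rmult_lt_0_compat; lra). lra.
  - intros x. apply (continuous_comp (fun t => a + (t - bb) / r) (fc f)); [|apply Hk].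
    apply (continuous_ext (fun t => (/ r) * t + (a - bb / r))). intros; simpl; field; lra. apply cont_lin.
  - intros t Ht. set (u := (t - bb) / r).
    assert (Eu : t - bb = r * u) by (unfold u; field; lra).
    assert (Hu : 0 <= u <= a' - a) by nra.
    assert (Hx : I11 (a + u)) by (unfold I11; lra).
    assert (Eg : g (a + u) = t) by (rewrite Hg by lra; lra).
    rewrite <- Eg at 1. rewrite Ginv_eq by auto. rewrite fc_eq by auto. reflexivity.
  - split; auto. rewrite P2. rewrite RInt_lin_sub by auto.
    replace (a + (bb + r * (a' - a) - bb) / r) with a' by (field; lra). reflexivity.
Qed.

Lemma Gpiece (g : R -> R) (a a' B r : R) : a < a' -> (forall x, a <= x <= a' -> g x = B + r * (x - a)) ->
  ex_RInt g a a' /\ RInt g a a' = (a' - a) * B + r * (a' - a)^2 / 2.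
Proof.
  intros Ha Hg.
  destruct (piece g (fun s => B + r * (s - a)) a a') as [P1 P2]; auto.
  - intros x. apply cplus. apply cconst. apply cmult. apply cconst. apply cminus. apply cid. apply cconst.
  - intros; apply Hg; lra.
  - split; auto. rewrite P2. apply RInt_linear.
Qed.

Section Fam.
Variables c r1 r2 r3 r4 : R.
Hypothesis H : Hyp c r1 r2 r3 r4.
Let g := gP c r1 r2 r3 r4.
Let b1 := -1 + r1 * (1 - c).
Let b2 := b1 + r2 * c.
Let b3 := b2 + r3 * c.
Ltac clamps := repeat first
  [ rewrite (clampR_lo (-1) (-c)) by lra | rewrite (clampR_mid (-1) (-c)) by lra | rewrite (clampR_hi (-1) (-c)) by lra
  | rewrite (clampR_lo (-c) 0) by lra | rewrite (clampR_mid (-c) 0) by lra | rewrite (clampR_hi (-c) 0) by lra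
  | rewrite (clampR_lo 0 c) by lra | rewrite (clampR_mid 0 c) by lra | rewrite (clampR_hi 0 c) by lra
  | rewrite (clampR_lo c 1) by lra | rewrite (clampR_mid c 1) by lra | rewrite (clampR_hi c 1) by lra ].


Lemma g_p1 s : -1 <= s <= -c -> g s = -1 + r1 * (s - -1).
Proof. destruct H as [Hc _]. intros. unfold g, gP. clamps. lra. Qed.
Lemma g_p2 s : -c <= s <= 0 -> g s = b1 + r2 * (s - - c).
Proof. destruct H as [Hc _]. intros. unfold g, gP, b1. clamps. lra. Qed.
Lemma g_p3 s : 0 <= s <= c -> g s = b2 + r3 * (s - 0).
Proof. destruct H as [Hc _]. intros. unfold g, gP, b2, b1. clamps. lra. Qed.
Lemma g_p4 s : c <= s <= 1 -> g s = b3 + r4 * (s - c).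
Proof. destruct H as [Hc _]. intros. unfold g, gP, b3, b2, b1. clamps. lra. Qed.

Lemma b4_eq : b3 + r4 * (1 - c) = 1.
Proof. destruct H as [Hc [_ [_ [_ [_ Hs]]]]]. unfold b3, b2, b1. try rewrite <- E1; try rewrite <- E2; lra. Qed.

Lemma g_sum s : I11 s ->
  (clampR (-1) (-c) s + 1) + (clampR (-c) 0 s + c) + clampR 0 c s + (clampR c 1 s - c) = s + 1.
Proof.
  destruct H as [Hc _]. unfold I11. intros Hs.
  destruct (Rle_dec s (-c)); [|destruct (Rle_dec s 0); [|destruct (Rle_dec s c)]]; clamps; lra.
Qed.

Lemma g_mono x y : I11 x -> I11 y -> x < y -> g x < g y.
Proof.
  intros Hx Hy Hxy.
  destruct H as [Hc [H1 [H2 [H3 [H4 _]]]]].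
  assert (S1 := g_sum x Hx). assert (S2 := g_sum y Hy).
  assert (M1 := clampR_mono (-1) (-c) x y ltac:(lra) ltac:(lra)).
  assert (M2 := clampR_mono (-c) 0 x y ltac:(lra) ltac:(lra)).
  assert (M3 := clampR_mono 0 c x y ltac:(lra) ltac:(lra)).
  assert (M4 := clampR_mono c 1 x y ltac:(lra) ltac:(lra)).
  unfold g, gP.
  set (d1 := clampR (-1) (-c) y - clampR (-1) (-c) x).
  set (d2 := clampR (-c) 0 y - clampR (-c) 0 x).
  set (d3 := clampR 0 c y - clampR 0 c x).
  set (d4 := clampR c 1 y - clampR c 1 x).
  assert (E : r1 * d1 + r2 * d2 + r3 * d3 + r4 * d4 > 0).
  { assert (0 <= r1 * d1) by (apply Rmult_le_pos; unfold d1; lra).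
    assert (0 <= r2 * d2) by (apply Rmult_le_pos; unfold d2; lra).
    assert (0 <= r3 * d3) by (apply Rmult_le_pos; unfold d3; lra).
    assert (0 <= r4 * d4) by (apply Rmult_le_pos; unfold d4; lra).
    destruct (Rlt_dec 0 d1). { assert (0 < r1 * d1) by (apply Rmult_lt_0_compat; lra). lra. }
    destruct (Rlt_dec 0 d2). { assert (0 < r2 * d2) by (apply Rmult_lt_0_compat; lra). lra. }
    destruct (Rlt_dec 0 d3). { assert (0 < r3 * d3) by (apply Rmult_lt_0_compat; lra). lra. }
    destruct (Rlt_dec 0 d4). { assert (0 < r4 * d4) by (apply Rmult_lt_0_compat; lra). lra. }
    exfalso. unfold d1, d2, d3, d4 in *. lra. }
  unfold d1, d2, d3, d4 in E. lra.
Qed.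

Lemma g_cont x : continuous g x.
Proof.
  destruct H as [Hc _]. unfold g, gP.
  repeat first [ apply cplus | apply cmult | apply cconst | apply cid | apply clampR_cont; lra ].
Qed.

Lemma g_inG : inG g.
Proof.
  split; [exact g_mono|]. split; [intros; apply cont_within, g_cont|].
  destruct H as [Hc _].
  split.
  - rewrite g_p1 by lra. lra.
  - rewrite g_p4 by lra. apply b4_eq.
Qed.

Lemma g_Q f : inG f -> Q f g = r1 * RInt (fc f) (-1) (-c) + r2 * RInt (fc f) (-c) 0
                              + r3 * RInt (fc f) 0 c + r4 * RInt (fc f) c 1.
Proof.
  intros Hf. destruct H as [Hc [H1 [H2 [H3 [H4 Hs]]]]].
  assert (Hm := g_mono).
  destruct (Qpiece f g (-1) (-c) (-1) r1 Hf Hm H1 ltac:(lra) ltac:(lra) ltac:(lra) g_p1) as [E1 I1].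
  destruct (Qpiece f g (-c) 0 b1 r2 Hf Hm H2 ltac:(lra) ltac:(lra) ltac:(lra) g_p2) as [E2 I2].
  destruct (Qpiece f g 0 c b2 r3 Hf Hm H3 ltac:(lra) ltac:(lra) ltac:(lra) g_p3) as [E3 I3].
  destruct (Qpiece f g c 1 b3 r4 Hf Hm H4 ltac:(lra) ltac:(lra) ltac:(lra) g_p4) as [E4 I4].
  replace (-1 + r1 * (-c - -1)) with b1 in E1, I1 by (unfold b1; ring).
  replace (b1 + r2 * (0 - - c)) with b2 in E2, I2 by (unfold b2; ring).
  replace (b2 + r3 * (c - 0)) with b3 in E3, I3 by (unfold b3; ring).
  rewrite b4_eq in E4, I4.
  unfold Q. rewrite (Chasles4 _ (-1) b1 b2 b3 1) by auto. lra.
Qed.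

Lemma g_int : RInt g (-1) 1 = (1 - c) * (-1) + r1 * (1 - c)^2 / 2 + c * b1 + r2 * c^2 / 2
   + c * b2 + r3 * c^2 / 2 + (1 - c) * b3 + r4 * (1 - c)^2 / 2.
Proof.
  destruct H as [Hc [H1 [H2 [H3 [H4 Hs]]]]].
  destruct (Gpiece g (-1) (-c) (-1) r1 ltac:(lra) g_p1) as [E1 I1].
  destruct (Gpiece g (-c) 0 b1 r2 ltac:(lra) g_p2) as [E2 I2].
  destruct (Gpiece g 0 c b2 r3 ltac:(lra) g_p3) as [E3 I3].
  destruct (Gpiece g c 1 b3 r4 ltac:(lra) g_p4) as [E4 I4].
  rewrite (Chasles4 _ (-1) (-c) 0 c 1) by auto.
  rewrite I1, I2, I3, I4. match goal with |- ?a = ?b => change (a = b :> R) end. field.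
Qed.

Lemma g_odd : r1 = r4 -> r2 = r3 -> forall t, I11 t -> g (- t) = - g t.
Proof.
  intros E1 E2 t Ht. destruct H as [Hc [H1 [H2 [H3 [H4 Hs]]]]]. unfold I11 in Ht.
  rewrite <- E1, <- E2 in Hs.
  destruct (Rle_dec t (-c)); [|destruct (Rle_dec t 0); [|destruct (Rle_dec t c)]].
  - rewrite (g_p1 t) by lra. rewrite (g_p4 (-t)) by lra. unfold b3, b2, b1. try rewrite <- E1; try rewrite <- E2; lra.
  - rewrite (g_p2 t) by lra. rewrite (g_p3 (-t)) by lra. unfold b3, b2, b1. try rewrite <- E1; try rewrite <- E2; lra.
  - rewrite (g_p3 t) by lra. rewrite (g_p2 (-t)) by lra. unfold b3, b2, b1. try rewrite <- E1; try rewrite <- E2; lra.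
  - rewrite (g_p4 t) by lra. rewrite (g_p1 (-t)) by lra. unfold b3, b2, b1. try rewrite <- E1; try rewrite <- E2; lra.
Qed.

End Fam.

Lemma total_J f c : inG0 f -> 0 < c < 1 ->
  RInt (fc f) (-1) (-c) + RInt (fc f) (-c) 0 + RInt (fc f) 0 c + RInt (fc f) c 1 = 0.
Proof.
  intros [Hf Hi] Hc. assert (Hk := fc_cont f Hf).
  rewrite <- (Chasles4 (fc f)) by (apply exc; auto).
  rewrite <- Hi. apply RInt_ext. rewrite Rmin_left, Rmax_right by lra.
  intros x Hx. apply fc_eq. unfold I11; lra.
Qed.

Lemma odd_J f a b : inG f -> (forall t, I11 t -> f (- t) = - f t) -> 0 <= a -> a < b -> b <= 1 ->
  RInt (fc f) (- b) (- a) = - RInt (fc f) a b.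
Proof.
  intros Hf Ho Ha Hab Hb. assert (Hk := fc_cont f Hf).
  rewrite <- RInt_refl by auto.
  rewrite (RInt_ext _ (fun y => opp (fc f y))).
  - rewrite (RInt_opp (V:=R_CompleteNormedModule)) by (apply exc; auto). reflexivity.
  - rewrite Rmin_left, Rmax_right by lra. intros x Hx.
    rewrite !fc_eq by (unfold I11; lra). apply Ho. unfold I11; lra.
Qed.

Lemma caseA_c f : inG f -> ~ inG00 f ->
  exists c, 0 < c < 1 /\ RInt (fc f) (-c) 0 + RInt (fc f) 0 c <> 0.
Proof.
  intros Hf Hn. apply NNPP. intros Hno. apply Hn. split; auto.
  assert (Hk := fc_cont f Hf).
  assert (Z : forall s, 0 <= s <= 1 -> fc f s + fc f (- s) = 0).
  { apply (zero_int (fun s => fc f s + fc f (- s))).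
    - intros x. apply cplus. apply Hk. apply (continuous_comp (fun y => - y) (fc f)). apply cont_opp. apply Hk.
    - intros c Hc. destruct (Req_dec (RInt (fc f) (-c) 0 + RInt (fc f) 0 c) 0) as [E|E].
      2:{ exfalso. apply Hno. exists c; auto. }
      rewrite (RInt_plus (V:=R_CompleteNormedModule) (fc f) (fun s => fc f (- s))).
      2: apply exc; auto.
      2:{ apply exc. intros x. apply (continuous_comp (fun y => - y) (fc f)). apply cont_opp. apply Hk. }
      rewrite RInt_refl by auto. rewrite Ropp_0.
      change (RInt (fc f) 0 c + RInt (fc f) (- c) 0 = 0). lra. }
  intros t Ht. unfold I11 in Ht.
  destruct (Rle_dec 0 t).
  - specialize (Z t ltac:(lra)). rewrite !fc_eq in Z by (unfold I11; lra). lra.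
  - specialize (Z (- t) ltac:(lra)). rewrite Ropp_involutive in Z.
    rewrite !fc_eq in Z by (unfold I11; lra). lra.
Qed.

Lemma caseB_c f : inG f -> (forall t, I11 t -> f (- t) = - f t) -> ~ is_id f ->
  exists c, 0 < c < 1 /\ (1 - c^2) * RInt (fc f) 0 c - c^2 * RInt (fc f) c 1 <> 0.
Proof.
  intros Hf Ho Hn. apply NNPP. intros Hno. apply Hn.
  assert (Hk := fc_cont f Hf).
  set (G1 := RInt (fc f) 0 1).
  assert (Hl : forall x, continuous (fun s => 0 + (- (2 * G1)) * (s - 0)) x).
  { intros x. apply cplus. apply cconst. apply cmult. apply cconst. apply cminus. apply cid. apply cconst. }
  assert (Z : forall s, 0 <= s <= 1 -> fc f s + (0 + (- (2 * G1)) * (s - 0)) = 0).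
  { apply (zero_int (fun s => fc f s + (0 + (- (2 * G1)) * (s - 0)))).
    - intros x. apply cplus. apply Hk. apply Hl.
    - intros c Hc. destruct (Req_dec ((1 - c^2) * RInt (fc f) 0 c - c^2 * RInt (fc f) c 1) 0) as [E|E].
      2:{ exfalso. apply Hno. exists c; auto. }
      rewrite (RInt_plus (V:=R_CompleteNormedModule) (fc f) (fun s => 0 + (- (2 * G1)) * (s - 0))).
      2: apply exc; auto. 2: apply exc; auto.
      rewrite RInt_linear.
      assert (Ec : RInt (fc f) 0 c + RInt (fc f) c 1 = G1) by (apply (RInt_Chasles (fc f) 0 c 1); apply exc; auto).
      change (RInt (fc f) 0 c + ((c - 0) * 0 + - (2 * G1) * (c - 0) ^ 2 / 2) = 0).
      nra. }
  assert (Z1 := Z 1 ltac:(lra)). rewrite fc_eq in Z1 by (unfold I11; lra).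
  destruct Hf as [_ [_ [_ F1]]]. rewrite F1 in Z1.
  intros t Ht. unfold I11 in Ht.
  destruct (Rle_dec 0 t).
  - specialize (Z t ltac:(lra)). rewrite fc_eq in Z by (unfold I11; lra). nra.
  - specialize (Z (- t) ltac:(lra)). rewrite fc_eq in Z by (unfold I11; lra).
    rewrite Ho in Z by (unfold I11; lra). nra.
Qed.

Ltac Rfix := match goal with |- ?a = ?b => change (a = b :> R) end.

Lemma famA f c e : inG0 f -> 0 < c < 1 -> -1/2 <= e <= 1/2 ->
  let g := gP c (1 - e * c) (1 + e * (1 - c)) (1 + e * (1 - c)) (1 - e * c) in
  inG00 g /\ inG0 g /\ Q f g = e * (RInt (fc f) (-c) 0 + RInt (fc f) 0 c).
Proof.
  intros Hf0 Hc He g.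
  assert (HH : Hyp c (1 - e * c) (1 + e * (1 - c)) (1 + e * (1 - c)) (1 - e * c)).
  { unfold Hyp. repeat split; try lra; try nra; try ring. }
  assert (Hg := g_inG _ _ _ _ _ HH).
  split; [|split].
  - split; auto. apply g_odd; auto.
  - split; auto. unfold g. rewrite g_int by auto. Rfix. field.
  - unfold g. rewrite g_Q by (auto; apply Hf0).
    assert (T := total_J f c Hf0 Hc).
    assert (E : RInt (fc f) (-1) (-c) = - RInt (fc f) (-c) 0 - RInt (fc f) 0 c - RInt (fc f) c 1) by lra.
    rewrite E. Rfix. ring.
Qed.

Lemma famB f c e : inG0 f -> (forall t, I11 t -> f (- t) = - f t) -> 0 < c < 1 -> -1/2 <= e <= 1/2 ->
  let g := gP c (1 + e * c^2) (1 - e * (1 - c^2)) (1 + e * (1 - c^2)) (1 - e * c^2) in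
  inG0 g /\ Q f g = 2 * e * ((1 - c^2) * RInt (fc f) 0 c - c^2 * RInt (fc f) c 1).
Proof.
  intros Hf0 Ho Hc He g.
  assert (HH : Hyp c (1 + e * c^2) (1 - e * (1 - c^2)) (1 + e * (1 - c^2)) (1 - e * c^2)).
  { unfold Hyp. assert (0 < c^2 < 1) by nra. repeat split; try lra; try nra; try ring. }
  assert (Hg := g_inG _ _ _ _ _ HH).
  split.
  - split; auto. unfold g. rewrite g_int by auto. Rfix. field.
  - unfold g. rewrite g_Q by (auto; apply Hf0).
    destruct Hf0 as [Hf _].
    assert (E1 := odd_J f c 1 Hf Ho ltac:(lra) ltac:(lra) ltac:(lra)).
    replace (- (1)) with (-1) in E1 by ring. rewrite E1.
    assert (E2 := odd_J f 0 c Hf Ho ltac:(lra) ltac:(lra) ltac:(lra)).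
    rewrite Ropp_0 in E2. rewrite E2.
    Rfix. ring.
Qed.

Theorem theorem4p2 (f : R -> R) :
  inG0 f -> ~ is_id f ->
  (exists g1 g2, inG0 g1 /\ inG0 g2 /\ Q f g1 > 0 /\ 0 > Q f g2) /\
  (~ inG00 f ->
   exists g1 g2, inG00 g1 /\ inG00 g2 /\ Q f g1 > 0 /\ 0 > Q f g2).
Proof.
  intros Hf0 Hn.
  assert (Hf := proj1 Hf0).
  assert (PA : ~ inG00 f -> exists g1 g2, (inG00 g1 /\ inG0 g1) /\ (inG00 g2 /\ inG0 g2) /\ Q f g1 > 0 /\ 0 > Q f g2).
  { intros Hno. destruct (caseA_c f Hf Hno) as [c [Hc HK]].
    set (K := RInt (fc f) (-c) 0 + RInt (fc f) 0 c) in *.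
    set (e := if Rlt_dec 0 K then 1/2 else -1/2).
    assert (He : -1/2 <= e <= 1/2 /\ e * K > 0).
    { unfold e. destruct (Rlt_dec 0 K). split; lra. split; [lra|]. assert (K < 0) by (destruct (Rtotal_order K 0) as [?|[?|?]]; lra). lra. }
    destruct (famA f c e Hf0 Hc ltac:(lra)) as [A1 [A2 A3]].
    destruct (famA f c (- e) Hf0 Hc ltac:(lra)) as [B1 [B2 B3]].
    eexists; eexists; split; [split; [exact A1|exact A2]|split; [split; [exact B1|exact B2]|]].
    rewrite A3, B3. fold K. lra. }
  split.
  2:{ intros Hno. destruct (PA Hno) as [g1 [g2 [[H1 _] [[H2 _] H3]]]]. exists g1, g2. auto. }
  destruct (classic (inG00 f)) as [Ho|Hno].
  - destruct Ho as [_ Ho].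
    destruct (caseB_c f Hf Ho Hn) as [c [Hc HK]].
    set (K := (1 - c^2) * RInt (fc f) 0 c - c^2 * RInt (fc f) c 1) in *.
    set (e := if Rlt_dec 0 K then 1/2 else -1/2).
    assert (He : -1/2 <= e <= 1/2 /\ e * K > 0).
    { unfold e. destruct (Rlt_dec 0 K). split; lra. split; [lra|]. assert (K < 0) by (destruct (Rtotal_order K 0) as [?|[?|?]]; lra). lra. }
    destruct (famB f c e Hf0 Ho Hc ltac:(lra)) as [A1 A3].
    destruct (famB f c (- e) Hf0 Ho Hc ltac:(lra)) as [B1 B3].
    eexists; eexists; split; [exact A1|split; [exact B1|]].
    rewrite A3, B3. fold K. lra.
  - destruct (PA Hno) as [g1 [g2 [H1 [H2 H3]]]].
    exists g1, g2. split; [|split]; tauto.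
Qed.
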